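(* Let $(X,\{\tau_k:k<\omega\})$ be a GLP-space and $n<\omega$, and suppose $(X,\tau_{n+1})$ is compact. Then for all $A,B\subseteq X$ and every limit ordinal $\lambda$: $$d_n^\lambda[A]\subseteq d_n(B)\iff \exists\alpha<\lambda\ \ d_n^\alpha[A]\subseteq d_n(B).$$
   Context: For a topology $\tau_n$ on $X$, $d_n(A)$ denotes the set of $\tau_n$-limit points of $A\subseteq X$. A GLP-space is a nonempty set $X$ with topologies $\tau_n$, $n<\omega$, such that $({\mathcal P}(X),\{d_n\})$ is a GLP-algebra, i.e. for all $n$, $m<n$, $x,y\subseteq X$: $d_n(x\cup y)=d_n(x)\cup d_n(y)$; $d_n(\emptyset)=\emptyset$; $d_n(x)=d_n(x\setminus d_n(x))$; $d_n(x)\subseteq d_m(x)$; $d_m(x)\subseteq X\setminus d_n(X\setminus d_m(x))$. For $A\subseteq X$ define by transfinite recursion $d_n^0[A]=X$, $d_n^{\alpha+1}[A]=d_n(d_n^\alpha[A]\cap A)$, and $d_n^\lambda[A]=\bigcap_{\alpha<\lambda}d_n^\alpha[A]$ for limit $\lambda$. *)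

(* Defs.v *)
From Stdlib Require Import List.
Set Implicit Arguments.

Definition set (X : Type) := X -> Prop.
Definition subset {X} (A B : set X) : Prop := forall x, A x -> B x.
Definition seteq {X} (A B : set X) : Prop := forall x, A x <-> B x.
Definition setU {X} (A B : set X) : set X := fun x => A x \/ B x.
Definition setI {X} (A B : set X) : set X := fun x => A x /\ B x.
Definition setD {X} (A B : set X) : set X := fun x => A x /\ ~ B x.
Definition setT {X} : set X := fun _ => True.
Definition set0 {X} : set X := fun _ => False.

Definition is_topology {X} (O : set X -> Prop) : Prop :=
  O set0 /\ O setT /\
  (forall F : set X -> Prop, (forall U, F U -> O U) ->
      O (fun x => exists U, F U /\ U x)) /\
  (forall U V, O U -> O V -> O (setI U V)).

Definition derived {X} (O : set X -> Prop) (A : set X) : set X :=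
  fun x => forall U, O U -> U x -> exists y, U y /\ A y /\ y <> x.

Definition compact {X} (O : set X -> Prop) : Prop :=
  forall F : set X -> Prop, (forall U, F U -> O U) ->
    (forall x, exists U, F U /\ U x) ->
    exists l : list (set X), (forall U, In U l -> F U) /\
      (forall x, exists U, In U l /\ U x).

(* GLP-space: nonempty X with topologies tau n such that (P(X), {d_n}) is a GLP-algebra *)
Definition GLP_space {X} (tau : nat -> set X -> Prop) : Prop :=
  inhabited X /\
  (forall n, is_topology (tau n)) /\
  (forall n (x y : set X),
      seteq (derived (tau n) (setU x y)) (setU (derived (tau n) x) (derived (tau n) y))) /\
  (forall n, seteq (derived (tau n) set0) set0) /\
  (forall n (x : set X),
      seteq (derived (tau n) x) (derived (tau n) (setD x (derived (tau n) x)))) /\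
  (forall n m (x : set X), m < n -> subset (derived (tau n) x) (derived (tau m) x)) /\
  (forall n m (x : set X), m < n ->
      subset (derived (tau m) x)
             (setD setT (derived (tau n) (setD setT (derived (tau m) x))))).

(* A strict well-order on L: L (with lt) represents an ordinal, its elements the
   smaller ordinals. *)
Definition well_order {L : Type} (lt : L -> L -> Prop) : Prop :=
  well_founded lt /\ (forall a b c, lt a b -> lt b c -> lt a c) /\
  (forall a b, lt a b \/ a = b \/ lt b a).

(* nonzero limit ordinal: nonempty, no largest element *)
Definition is_limit {L : Type} (lt : L -> L -> Prop) : Prop :=
  inhabited L /\ forall a, exists b, lt a b.

Definition ipred {L : Type} (lt : L -> L -> Prop) (b a : L) : Prop :=
  lt b a /\ ~ (exists c, lt b c /\ lt c a).

(* Transfinite iterate d^alpha[A] for alpha ranging over the well-order (L,lt):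
   d^alpha = d(d^beta ∩ A) if alpha = beta+1, and the intersection of all d^beta,
   beta < alpha, otherwise (this gives X for alpha = 0). *)
Definition dpow {X L : Type} (lt : L -> L -> Prop) (wf : well_founded lt)
    (d : set X -> set X) (A : set X) : L -> set X :=
  Fix wf (fun _ => set X)
    (fun a rec => fun x =>
       (exists b (H : lt b a), ipred lt b a /\ d (fun y => rec b H y /\ A y) x) \/
       ((~ exists b, ipred lt b a) /\ forall b (H : lt b a), rec b H x)).
Arguments dpow {X L} lt wf d A _ _.

(* Main.v *)
Require Import Defs.
From Stdlib Require Import List Classical FunctionalExtensionality.

Lemma dpow_eq {X L : Type} (lt : L -> L -> Prop) (wf : well_founded lt)
    (d : set X -> set X) (A : set X) (a : L) :
  dpow lt wf d A a = fun x =>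
       (exists b (H : lt b a), ipred lt b a /\ d (fun y => dpow lt wf d A b y /\ A y) x) \/
       ((~ exists b, ipred lt b a) /\ forall b (H : lt b a), dpow lt wf d A b x).
Proof.
  unfold dpow at 1. rewrite Fix_eq. reflexivity.
  intros a' f g Hfg.
  assert (E : f = g).
  { apply functional_extensionality_dep; intro y.
    apply functional_extensionality_dep; intro p. apply Hfg. }
  subst; reflexivity.
Qed.

Lemma derived_mono {X} (O : set X -> Prop) (A B : set X) :
  subset A B -> subset (derived O A) (derived O B).
Proof.
  intros HAB x Hx U HU Ux. destruct (Hx U HU Ux) as [y [Uy [Ay yx]]].
  exists y; auto.
Qed.

Lemma not_derived {X} (O : set X -> Prop) (A : set X) x :
  ~ derived O A x -> exists U, O U /\ U x /\ forall y, U y -> A y -> y = x.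
Proof.
  intro H. apply NNPP; intro H2; apply H; intros U HU Ux.
  apply NNPP; intro H3; apply H2; exists U; repeat split; auto.
  intros y Uy Ay; apply NNPP; intro; apply H3; eauto.
Qed.

Lemma dd_sub {X} (O : set X -> Prop) (Htop : is_topology O)
  (Hdd : forall x, seteq (derived O x) (derived O (setD x (derived O x)))) (Y : set X) :
  subset (derived O (derived O Y)) (derived O Y).
Proof.
  intros z Hz. apply NNPP; intro Hn.
  destruct (not_derived _ _ _ Hn) as [U [HU [Uz HUY]]].
  destruct Htop as [_ [HT [_ HI]]].
  set (x := fun v => v = z \/ (U v /\ derived O (fun t => t = z) v)).
  assert (Hx : forall v, x v -> derived O x v).
  { intros v [->|[Uv Dv]].
    - intros V HV Vz.
      destruct (Hz (setI V U) (HI _ _ HV HU) (conj Vz Uz)) as [w [[Vw Uw] [DYw wz]]].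
      exists w; split; [exact Vw|]; split; [|exact wz]. right; split; [exact Uw|].
      intros W HW Ww.
      destruct (DYw (setI W U) (HI _ _ HW HU) (conj Ww Uw)) as [y [[Wy Uy] [Yy yw]]].
      exists y. split; [exact Wy|]. split; [ apply HUY; auto | exact yw].
    - apply (derived_mono O (fun t => t = z) x); [|exact Dv].
      intros t Ht; left; exact Ht. }
  destruct (proj1 (Hdd x z) (Hx z (or_introl eq_refl)) setT HT I)
    as [y [_ [[xy nDy] _]]].
  exact (nDy (Hx y xy)).
Qed.

Lemma ipred_uniq {L} (lt : L -> L -> Prop) (Hwo : well_order lt) b b' a :
  ipred lt b a -> ipred lt b' a -> b = b'.
Proof.
  intros [H1 H2] [H3 H4]. destruct Hwo as [_ [_ Htri]].
  destruct (Htri b b') as [h|[h|h]]; auto.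
  - exfalso; apply H2; eauto.
  - exfalso; apply H4; eauto.
Qed.

Theorem mainTheorem6 (X : Type) (tau : nat -> set X -> Prop) (n : nat)
  (HGLP : GLP_space tau) (Hcpt : compact (tau (S n)))
  (A B : set X)
  (L : Type) (lt : L -> L -> Prop) (Hwo : well_order lt) (wf : well_founded lt)
  (Hlim : is_limit lt) :
  subset (fun x => forall a : L, dpow lt wf (derived (tau n)) A a x)
         (derived (tau n) B)
  <-> exists a : L, subset (dpow lt wf (derived (tau n)) A a) (derived (tau n) B).
Proof.
  destruct HGLP as [_ [Htop [_ [_ [Hdd [Hmono Hopen]]]]]].
  set (D := derived (tau n)).
  set (P := dpow lt wf D A).
  assert (HPe : forall a x, P a x <->
       (exists b (H : lt b a), ipred lt b a /\ D (fun y => P b y /\ A y) x) \/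
       ((~ exists b, ipred lt b a) /\ forall b (H : lt b a), P b x)).
  { intros a x. unfold P. rewrite dpow_eq. tauto. }
  destruct Hwo as [Hwf' [Htrans Htri]] eqn:EHwo.
  assert (Hup : forall U x, tau n U -> U x ->
             exists V, tau (S n) V /\ V x /\ subset V U).
  { intros U x HU Ux.
    assert (Hn : ~ D (setD setT U) x).
    { intro H. destruct (H U HU Ux) as [y [Uy [[_ nUy] _]]]. auto. }
    assert (Hn1 : ~ derived (tau (S n)) (setD setT U) x).
    { intro H; apply Hn. apply (Hmono (S n) n); auto. }
    destruct (not_derived _ _ _ Hn1) as [V [HV [Vx HVy]]].
    exists V; repeat split; auto.
    intros y Vy. apply NNPP; intro nUy.
    assert (y = x) by (apply HVy; [exact Vy| split; [exact I|exact nUy]]).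
    subst; auto. }
  assert (HopenB : forall x, D B x -> exists V, tau (S n) V /\ V x /\ subset V (D B)).
  { intros x Hx.
    pose proof (Hopen (S n) n B (PeanoNat.Nat.lt_succ_diag_r n) x Hx) as [_ H].
    destruct (not_derived _ _ _ H) as [V [HV [Vx HVy]]].
    exists V; repeat split; auto.
    intros y Vy. apply NNPP; intro nUy.
    assert (y = x) by (apply HVy; [exact Vy| split; [exact I|exact nUy]]).
    subst; auto. }
  assert (Hm : forall g a, (lt a g \/ a = g) -> subset (P g) (P a)).
  { intro g. induction g as [g IHg] using (well_founded_induction wf).
    intro a. induction a as [a IHa] using (well_founded_induction wf).
    intros [Hag| ->]; [|intros x h; exact h].
    intros x Hgx. apply HPe in Hgx.
    destruct Hgx as [[c [Hc [Hic Hdc]]] | [_ Hall]]; [|apply Hall; exact Hag].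
    assert (Hac : lt a c \/ a = c).
    { destruct (Htri a c) as [h|[h|h]]; auto.
      exfalso; apply (proj2 Hic); eauto. }
    apply HPe.
    destruct (classic (exists b, ipred lt b a)) as [[b Hb]|Hnb].
    - left. exists b, (proj1 Hb). split; [exact Hb|].
      revert Hdc. apply derived_mono. intros y [Py Ay]. split; [|exact Ay].
      apply (IHg c Hc b); [|exact Py].
      destruct Hac as [h|h]; left; [exact (Htrans _ _ _ (proj1 Hb) h)|subst c; exact (proj1 Hb)].
    - right. split; [exact Hnb|]. intros b Hb.
      apply (IHa b Hb); [left; eauto|].
      apply HPe. left. exists c, Hc; auto. }
  assert (Hcl : forall a x, ~ P a x ->
             exists V, tau (S n) V /\ V x /\ forall y, V y -> ~ P a y).
  { intro a. induction a as [a IHa] using (well_founded_induction wf).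
    intros x Hnx.
    destruct (classic (exists b, ipred lt b a)) as [[b Hb]|Hnb].
    - set (Z := fun y => P b y /\ A y).
      assert (H1 : ~ D Z x).
      { intro h; apply Hnx, HPe; left; exists b, (proj1 Hb); auto. }
      assert (H2 : ~ D (D Z) x).
      { intro h; apply H1. apply (dd_sub (tau n) (Htop n) (Hdd n)); exact h. }
      destruct (not_derived _ _ _ H2) as [U [HU [Ux HUy]]].
      destruct (Hup U x HU Ux) as [V [HV [Vx VU]]].
      exists V; repeat split; auto.
      intros y Vy Pay. apply HPe in Pay.
      destruct Pay as [[b' [Hb' [Hib' Hd]]] | [Hn _]].
      + assert (b' = b) by (apply (ipred_uniq lt Hwo b' b a); auto). subst b'.
        assert (y = x) by (apply HUy; [apply VU; exact Vy| exact Hd]).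
        subst; auto.
      + apply Hn; eauto.
    - assert (Hex : exists b, lt b a /\ ~ P b x).
      { apply NNPP; intro h; apply Hnx, HPe; right; split; [exact Hnb|].
        intros b Hb; apply NNPP; intro; apply h; eauto. }
      destruct Hex as [b [Hb Hnbx]].
      destruct (IHa b Hb x Hnbx) as [V [HV [Vx HVy]]].
      exists V; repeat split; auto.
      intros y Vy Pay. apply HPe in Pay.
      destruct Pay as [[b' [Hb' [Hib' Hd]]] | [Hn Hall]].
      + apply Hnb; eauto.
      + apply (HVy y Vy), Hall, Hb. }
  split.
  - intro H.
    set (F := fun U => tau (S n) U /\
                (subset U (D B) \/ exists a, forall y, U y -> ~ P a y)).
    destruct (Hcpt F) as [l [Hl Hcov]].
    { intros U [h _]; exact h. }
    { intro x. destruct (classic (forall a, P a x)) as [Hall|Hna].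
      - destruct (HopenB x (H x Hall)) as [V [HV [Vx VB]]].
        exists V; split; [split; [exact HV|left; exact VB]|exact Vx].
      - assert (Hex : exists a, ~ P a x).
        { apply NNPP; intro h; apply Hna; intro a; apply NNPP; intro; apply h; eauto. }
        destruct Hex as [a Ha].
        destruct (Hcl a x Ha) as [V [HV [Vx HVy]]].
        exists V; split; [split; [exact HV|right; exists a; exact HVy]|exact Vx]. }
    assert (Hlist : forall l : list (set X), (forall U, In U l -> F U) ->
               exists a, forall U, In U l -> subset U (D B) \/ forall y, U y -> ~ P a y).
    { induction l0 as [|U l0 IH]; intros Hl0.
      - destruct Hlim as [[a0] _]. exists a0. intros U [].
      - destruct IH as [a1 Ha1]. { intros V HV; apply Hl0; right; exact HV. }
        destruct (proj2 (Hl0 U (or_introl eq_refl))) as [HUB|[a2 Ha2]].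
        + exists a1. intros V [<-|HV]; auto.
        + assert (Hmax : exists a, subset (P a) (P a1) /\ subset (P a) (P a2)).
          { destruct (Htri a1 a2) as [h|[h|h]].
            - exists a2; split; [apply Hm; auto|intros y q; exact q].
            - subst; exists a2; split; intros y q; exact q.
            - exists a1; split; [intros y q; exact q|apply Hm; auto]. }
          destruct Hmax as [a [S1 S2]].
          exists a. intros V [<-|HV].
          * right. intros y Uy Py. exact (Ha2 y Uy (S2 y Py)).
          * destruct (Ha1 V HV) as [h|h]; [left; exact h|right].
            intros y Vy Py. exact (h y Vy (S1 y Py)). }
    destruct (Hlist l Hl) as [a Ha].
    exists a. intros x Px.
    destruct (Hcov x) as [U [HU Ux]].
    destruct (Ha U HU) as [h|h]; [exact (h x Ux)|exfalso; exact (h x Ux Px)].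
  - intros [a Ha] x Hx. apply Ha, Hx.
Qed.
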